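(* Let $d,N\ge1$, $\epsilon\in(0,1]$, $\delta\ge0$ with $C_d\delta<1$, and $\beta\in(0,1/2]$ with $N\ge\ln(2d/\beta)$. Let $x(1),\dots,x(N)\in[-1,1]^d$ and let $x^*(i)=\mathcal{M}(x(i))$ be obtained by applying Mechanism-1 (with parameters $\epsilon,\delta$) independently to each $x(i)$. For $j\in\{1,\dots,d\}$ put $Z_j=\frac1N\sum_{i=1}^N x^*_j(i)$ and $X_j=\frac1N\sum_{i=1}^N x_j(i)$. Then with probability at least $1-\beta$, $$\max_{j\in\{1,\dots,d\}}|Z_j-X_j|=O\!\left(\frac{\sqrt{d\log(d/\beta)}}{(\epsilon+2^d\delta)\sqrt N}\right),$$ where the implied constant is absolute (independent of $d,N,\epsilon,\delta,\beta$ and the data).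
   Context: Let $C_d=2^{d-1}$ if $d$ is odd and $C_d=2^{d-1}-\frac12\binom{d}{d/2}$ if $d$ is even. For $B>0$ and $v\in\{-1,1\}^d$ let $T^+(v)=\{y\in\{-B,B\}^d: y\cdot v>0\}$, $T^-(v)=\{y\in\{-B,B\}^d: y\cdot v\le 0\}$. For $\alpha\in[0,1]$, $\mathcal{M}_{\alpha,B}$ takes $x\in[-1,1]^d$, samples $V\in\{-1,1\}^d$ with independent coordinates $\mathbb{P}[V_j=\pm1]=\frac12\pm\frac12x_j$, independently samples $u\in\{0,1\}$ with $\mathbb{P}[u=1]=\alpha$, and outputs a uniformly random element of $T^+(V)$ if $u=1$ and of $T^-(V)$ if $u=0$. Mechanism-1 with parameters $\epsilon>0,\delta\ge0$ is $\mathcal{M}=\mathcal{M}_{\alpha_{\epsilon,\delta},B_{\epsilon,\delta}}$ where $\alpha_{\epsilon,\delta}=\frac{e^\epsilon+C_d\delta}{e^\epsilon+1}$ if $d$ is odd and $\alpha_{\epsilon,\delta}=\frac{e^\epsilon C_d+\delta C_d(2^d-C_d)}{(e^\epsilon-1)C_d+2^d}$ if $d$ is even, and $B_{\epsilon,\delta}=\frac{2^d+C_d(e^\epsilon-1)}{\binom{d-1}{(d-1)/2}(e^\epsilon+2^d\delta-1)}$ if $d$ is odd, $B_{\epsilon,\delta}=\frac{2^d+C_d(e^\epsilon-1)}{\binom{d-1}{d/2}(e^\epsilon+2^d\delta-1)}$ if $d$ is even. *)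

(* Defs.v *)
From Stdlib Require Import Reals Lra List ClassicalEpsilon.
Import ListNotations.
Open Scope R_scope.

Definition rsum {A} (f : A -> R) (l : list A) : R := fold_right Rplus 0 (map f l).
Definition rprod {A} (f : A -> R) (l : list A) : R := fold_right Rmult 1 (map f l).

(* Sign vectors in {-1,1}^d, encoded as lists of booleans of length d
   (true = +1, false = -1). *)
Fixpoint all_signs (d : nat) : list (list bool) :=
  match d with
  | O => [[]]
  | S k => map (cons true) (all_signs k) ++ map (cons false) (all_signs k)
  end.

Definition sgn (b : bool) : R := if b then 1 else -1.

Definition coord (s : list bool) (j : nat) : R := sgn (nth j s false).

Definition Cd (d : nat) : R :=
  if Nat.even d then 2 ^ (d - 1) - / 2 * Binomial.C d (d / 2)
  else 2 ^ (d - 1).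

Definition alpha_ed (d : nat) (eps delta : R) : R :=
  if Nat.even d then
    (exp eps * Cd d + delta * Cd d * (2 ^ d - Cd d)) / ((exp eps - 1) * Cd d + 2 ^ d)
  else (exp eps + Cd d * delta) / (exp eps + 1).

Definition B_ed (d : nat) (eps delta : R) : R :=
  if Nat.even d then
    (2 ^ d + Cd d * (exp eps - 1)) /
      (Binomial.C (d - 1) (d / 2) * (exp eps + 2 ^ d * delta - 1))
  else
    (2 ^ d + Cd d * (exp eps - 1)) /
      (Binomial.C (d - 1) ((d - 1) / 2) * (exp eps + 2 ^ d * delta - 1)).

Definition dotBy (d : nat) (B : R) (s w : list bool) : R :=
  rsum (fun j => (B * coord s j) * coord w j) (seq 0 d).

Definition card_Tplus (d : nat) (B : R) (w : list bool) : R :=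
  INR (length (filter (fun s => if Rlt_dec 0 (dotBy d B s w) then true else false)
                      (all_signs d))).
Definition card_Tminus (d : nat) (B : R) (w : list bool) : R :=
  INR (length (filter (fun s => if Rlt_dec 0 (dotBy d B s w) then false else true)
                      (all_signs d))).

Definition prob_V (d : nat) (x : nat -> R) (w : list bool) : R :=
  rprod (fun j => / 2 + / 2 * x j * coord w j) (seq 0 d).

(* Probability that M_{alpha,B}(x) outputs the point B * s of {-B,B}^d. *)
Definition mech_pmf (d : nat) (alpha B : R) (x : nat -> R) (s : list bool) : R :=
  rsum (fun w => prob_V d x w *
          (if Rlt_dec 0 (dotBy d B s w)
           then alpha / card_Tplus d B w
           else (1 - alpha) / card_Tminus d B w))
       (all_signs d).

Fixpoint all_outcomes (d n : nat) : list (list (list bool)) :=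
  match n with
  | O => [[]]
  | S k => concat (map (fun s => map (cons s) (all_outcomes d k)) (all_signs d))
  end.

(* Joint pmf: mechanism applied independently to x(0), ..., x(N-1);
   x i j is the j-th coordinate of the i-th data point. *)
Definition joint_pmf (d N : nat) (alpha B : R) (x : nat -> nat -> R)
    (ys : list (list bool)) : R :=
  rprod (fun i => mech_pmf d alpha B (x i) (nth i ys [])) (seq 0 N).

Definition indic (P : Prop) : R :=
  if excluded_middle_informative P then 1 else 0.

Definition prob_mech1 (d N : nat) (eps delta : R) (x : nat -> nat -> R)
    (E : list (list bool) -> Prop) : R :=
  rsum (fun ys => joint_pmf d N (alpha_ed d eps delta) (B_ed d eps delta) x ys * indic (E ys))
       (all_outcomes d N).

Definition Zj (d N : nat) (eps delta : R) (ys : list (list bool)) (j : nat) : R :=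
  / INR N * rsum (fun i => B_ed d eps delta * coord (nth i ys []) j) (seq 0 N).

Definition Xj (N : nat) (x : nat -> nat -> R) (j : nat) : R :=
  / INR N * rsum (fun i => x i j) (seq 0 N).

(* max_{j in 1..d} |Z_j - X_j| (0-based indices; values are >= 0, d >= 1). *)
Definition maxdev (d N : nat) (eps delta : R) (x : nat -> nat -> R)
    (ys : list (list bool)) : R :=
  fold_right Rmax 0 (map (fun j => Rabs (Zj d N eps delta ys j - Xj N x j)) (seq 0 d)).

(* Main.v *)
Require Import Defs.
From Stdlib Require Import Reals Lra Lia List Arith ClassicalEpsilon.
Import ListNotations.
Open Scope R_scope.


Lemma rsum_nil {A} (f : A -> R) : rsum f [] = 0.
Proof. reflexivity. Qed.
Lemma rsum_cons {A} (f : A -> R) a l : rsum f (a :: l) = f a + rsum f l.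
Proof. reflexivity. Qed.
Lemma rsum_app {A} (f : A -> R) l1 l2 : rsum f (l1 ++ l2) = rsum f l1 + rsum f l2.
Proof. induction l1; simpl; [rewrite rsum_nil; ring| rewrite !rsum_cons, IHl1; ring]. Qed.
Lemma rsum_map {A B} (f : B -> R) (g : A -> B) l : rsum f (map g l) = rsum (fun a => f (g a)) l.
Proof. unfold rsum; rewrite map_map; reflexivity. Qed.
Lemma rsum_ext_in {A} (f g : A -> R) l : (forall a, In a l -> f a = g a) -> rsum f l = rsum g l.
Proof. induction l; intros H; [reflexivity|]. rewrite !rsum_cons, H, IHl; simpl; auto; intros; apply H; simpl; auto. Qed.
Lemma rsum_ext {A} (f g : A -> R) l : (forall a, f a = g a) -> rsum f l = rsum g l.
Proof. intros; apply rsum_ext_in; auto. Qed.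
Lemma rsum_plus {A} (f g : A -> R) l : rsum (fun a => f a + g a) l = rsum f l + rsum g l.
Proof. induction l; [simpl; unfold rsum; simpl; ring|]. rewrite !rsum_cons, IHl; ring. Qed.
Lemma rsum_scal {A} (c : R) (f : A -> R) l : rsum (fun a => c * f a) l = c * rsum f l.
Proof. induction l; [unfold rsum; simpl; ring|]. rewrite !rsum_cons, IHl; ring. Qed.
Lemma rsum_scal_r {A} (c : R) (f : A -> R) l : rsum (fun a => f a * c) l = rsum f l * c.
Proof. induction l; [unfold rsum; simpl; ring|]. rewrite !rsum_cons, IHl; ring. Qed.
Lemma rsum_minus {A} (f g : A -> R) l : rsum (fun a => f a - g a) l = rsum f l - rsum g l.
Proof. induction l; [unfold rsum; simpl; ring|]. rewrite !rsum_cons, IHl; ring. Qed.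
Lemma rsum_const0 {A} l : rsum (fun _ : A => 0) l = 0.
Proof. induction l; [reflexivity|]. rewrite rsum_cons, IHl; ring. Qed.
Lemma rsum_le {A} (f g : A -> R) l : (forall a, In a l -> f a <= g a) -> rsum f l <= rsum g l.
Proof. induction l; intros H; [unfold rsum; simpl; lra|]. rewrite !rsum_cons.
  apply Rplus_le_compat; [apply H; left; auto| apply IHl; intros; apply H; right; auto]. Qed.
Lemma rsum_nonneg {A} (f : A -> R) l : (forall a, In a l -> 0 <= f a) -> 0 <= rsum f l.
Proof. intros H. rewrite <- (rsum_const0 l). apply rsum_le; auto. Qed.
Lemma rsum_concat {A} (f : A -> R) (ls : list (list A)) : rsum f (concat ls) = rsum (rsum f) ls.
Proof. induction ls; [reflexivity|]. simpl. rewrite rsum_app, rsum_cons, IHls; reflexivity. Qed.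
Lemma rsum_swap {A B} (F : A -> B -> R) l1 l2 :
  rsum (fun a => rsum (fun b => F a b) l2) l1 = rsum (fun b => rsum (fun a => F a b) l1) l2.
Proof. induction l1; simpl.
  - unfold rsum at 1; simpl. symmetry. apply rsum_const0.
  - rewrite rsum_cons, IHl1, <- rsum_plus. apply rsum_ext; intros; rewrite rsum_cons; ring. Qed.
Lemma rsum_ge_elem {A} (f : A -> R) l a : In a l -> (forall b, In b l -> 0 <= f b) -> f a <= rsum f l.
Proof. induction l; intros Hin H; [destruct Hin|]. rewrite rsum_cons. destruct Hin as [->|Hin].
  - assert (0 <= rsum f l) by (apply rsum_nonneg; intros; apply H; right; auto). lra.
  - assert (0 <= f a0) by (apply H; left; auto). assert (f a <= rsum f l) by (apply IHl; auto; intros; apply H; right; auto). lra. Qed.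
Lemma rsum_length_filter {A} (p : A -> bool) l : INR (length (filter p l)) = rsum (fun a => if p a then 1 else 0) l.
Proof. induction l; [reflexivity|]. simpl. rewrite rsum_cons. destruct (p a); simpl length; [rewrite S_INR|]; rewrite IHl; ring. Qed.

Lemma rprod_cons {A} (f : A -> R) a l : rprod f (a :: l) = f a * rprod f l.
Proof. reflexivity. Qed.
Lemma rprod_map {A B} (f : B -> R) (g : A -> B) l : rprod f (map g l) = rprod (fun a => f (g a)) l.
Proof. unfold rprod; rewrite map_map; reflexivity. Qed.
Lemma rprod_ext_in {A} (f g : A -> R) l : (forall a, In a l -> f a = g a) -> rprod f l = rprod g l.
Proof. induction l; intros H; [reflexivity|]. rewrite !rprod_cons, H, IHl; simpl; auto; intros; apply H; simpl; auto. Qed.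
Lemma rprod_mult {A} (f g : A -> R) l : rprod (fun a => f a * g a) l = rprod f l * rprod g l.
Proof. induction l; [unfold rprod; simpl; ring|]. rewrite !rprod_cons, IHl; ring. Qed.
Lemma rprod_nonneg {A} (f : A -> R) l : (forall a, In a l -> 0 <= f a) -> 0 <= rprod f l.
Proof. induction l; intros H; [unfold rprod; simpl; lra|]. rewrite rprod_cons.
  apply Rmult_le_pos; [apply H; left; auto| apply IHl; intros; apply H; right; auto]. Qed.
Lemma rprod_le {A} (f g : A -> R) l : (forall a, In a l -> 0 <= f a <= g a) -> rprod f l <= rprod g l.
Proof. induction l; intros H; [unfold rprod; simpl; lra|]. rewrite !rprod_cons.
  assert (0 <= rprod f l) by (apply rprod_nonneg; intros; apply H; right; auto).
  assert (rprod f l <= rprod g l) by (apply IHl; intros; apply H; right; auto).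
  destruct (H a (or_introl eq_refl)). apply Rmult_le_compat; auto. Qed.
Lemma rprod_const1 {A} l : rprod (fun _ : A => 1) l = 1.
Proof. induction l; [reflexivity|]. rewrite rprod_cons, IHl; ring. Qed.
Lemma rprod_const {A} c l : rprod (fun _ : A => c) l = c ^ length l.
Proof. induction l; [reflexivity|]. rewrite rprod_cons, IHl; simpl; ring. Qed.
Lemma exp_rsum {A} (f : A -> R) l : exp (rsum f l) = rprod (fun a => exp (f a)) l.
Proof. induction l; [unfold rsum, rprod; simpl; apply exp_0|]. rewrite rsum_cons, rprod_cons, exp_plus, IHl; reflexivity. Qed.
Lemma seq_shift_S n : seq 1 n = map S (seq 0 n).
Proof. symmetry; apply seq_shift. Qed.

Lemma all_signs_S d : all_signs (S d) = map (cons true) (all_signs d) ++ map (cons false) (all_signs d).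
Proof. reflexivity. Qed.

Lemma all_signs_length d s : In s (all_signs d) -> length s = d.
Proof. revert s; induction d; simpl; intros s H.
  - destruct H as [<-|[]]; reflexivity.
  - apply in_app_or in H; destruct H as [H|H]; apply in_map_iff in H; destruct H as [s' [<- H]]; simpl; f_equal; auto. Qed.

Lemma all_signs_complete s : In s (all_signs (length s)).
Proof. induction s; simpl; [auto|]. apply in_or_app. destruct a; [left|right]; apply in_map; auto. Qed.

Fixpoint agree (s w : list bool) : nat :=
  match s, w with
  | a :: s', b :: w' => ((if Bool.eqb a b then 1 else 0) + agree s' w')%nat
  | _, _ => 0%nat
  end.

Lemma coord_0 a s : coord (a :: s) 0 = sgn a. Proof. reflexivity. Qed.
Lemma coord_S a s j : coord (a :: s) (S j) = coord s j. Proof. reflexivity. Qed.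

Lemma rsum_seqS (f : nat -> R) n : rsum f (seq 0 (S n)) = f 0%nat + rsum (fun j => f (S j)) (seq 0 n).
Proof. simpl seq. rewrite rsum_cons, seq_shift_S, rsum_map. reflexivity. Qed.
Lemma rprod_seqS (f : nat -> R) n : rprod f (seq 0 (S n)) = f 0%nat * rprod (fun j => f (S j)) (seq 0 n).
Proof. simpl seq. rewrite rprod_cons, seq_shift_S, rprod_map. reflexivity. Qed.

Lemma dot_agree d B s w : length s = d -> length w = d ->
  dotBy d B s w = B * (2 * INR (agree s w) - INR d).
Proof. revert s w; induction d; intros s w Hs Hw.
  - destruct s; [|discriminate]. destruct w; [|discriminate]. unfold dotBy, rsum; simpl; ring.
  - destruct s as [|a s]; [discriminate|]. destruct w as [|b w]; [discriminate|].
    simpl in Hs, Hw. injection Hs; injection Hw; intros Hw' Hs'.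
    unfold dotBy. rewrite rsum_seqS. rewrite coord_0, coord_0.
    change (rsum (fun j => B * coord (a :: s) (S j) * coord (b :: w) (S j)) (seq 0 d)) with (dotBy d B s w).
    rewrite IHd by auto. simpl agree. rewrite plus_INR, S_INR.
    destruct a, b; simpl; ring. Qed.

Lemma cond_agree {T : Type} d B s w (X Y : T) : 0 < B -> length s = d -> length w = d ->
  (if Rlt_dec 0 (dotBy d B s w) then X else Y) = (if Nat.leb (S (d/2)) (agree s w) then X else Y).
Proof. intros HB Hs Hw. rewrite dot_agree by auto.
  destruct (Rlt_dec _ _) as [H|H]; destruct (Nat.leb_spec (S (d/2)) (agree s w)) as [H'|H']; auto.
  - exfalso. assert (0 < 2 * INR (agree s w) - INR d).
    { destruct (Rle_or_lt (2 * INR (agree s w) - INR d) 0); auto. exfalso.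
      nra. }
    assert (INR d < INR (2 * agree s w)) by (rewrite mult_INR; simpl; lra).
    apply INR_lt in H1. pose proof (Nat.div_mod d 2). pose proof (Nat.mod_upper_bound d 2). lia.
  - exfalso. apply H. apply Rmult_lt_0_compat; auto.
    assert ((d < 2 * agree s w)%nat) by (pose proof (Nat.div_mod d 2); pose proof (Nat.mod_upper_bound d 2); lia).
    apply lt_INR in H0. rewrite mult_INR in H0. simpl in H0. lra. Qed.

Fixpoint U (d t : nat) : R :=
  match d with
  | O => if Nat.eqb t 0 then 1 else 0
  | S d' => U d' (pred t) + U d' t
  end.

Definition W (d t : nat) : R :=
  match d with O => 0 | S d' => U d' (pred t) - U d' t end.

Definition ind (b : bool) : R := if b then 1 else 0.

Lemma leb_S_pred t a : Nat.leb t (S a) = Nat.leb (pred t) a.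
Proof. destruct t; reflexivity. Qed.

Lemma count_U d w t : length w = d ->
  rsum (fun s => ind (Nat.leb t (agree s w))) (all_signs d) = U d t.
Proof. revert w t; induction d; intros w t Hw.
  - destruct w; [|discriminate]. simpl. unfold rsum; simpl. destruct t; simpl; unfold ind; simpl; ring.
  - destruct w as [|b w]; [discriminate|]. simpl in Hw; injection Hw; intros Hw'.
    rewrite all_signs_S, rsum_app, !rsum_map. simpl agree.
    destruct b; simpl Bool.eqb; simpl plus.
    + rewrite (rsum_ext (fun a => ind (Nat.leb t (S (agree a w)))) (fun a => ind (Nat.leb (pred t) (agree a w))))
        by (intros; rewrite leb_S_pred; reflexivity).
      rewrite !IHd by auto. simpl. ring.
    + rewrite (rsum_ext (fun a => ind (Nat.leb t (S (agree a w)))) (fun a => ind (Nat.leb (pred t) (agree a w))))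
        by (intros; rewrite leb_S_pred; reflexivity).
      rewrite !IHd by auto. simpl. ring. Qed.

Lemma W_rec d t : W (S (S d)) t = W (S d) (pred t) + W (S d) t.
Proof. simpl. ring. Qed.

Lemma coord_W d w j t : length w = d -> (j < d)%nat ->
  rsum (fun s => ind (Nat.leb t (agree s w)) * coord s j) (all_signs d) = coord w j * W d t.
Proof. revert w j t; induction d; intros w j t Hw Hj; [lia|].
  destruct w as [|b w]; [discriminate|]. simpl in Hw; injection Hw; intros Hw'.
  rewrite all_signs_S, rsum_app, !rsum_map. simpl agree.
  destruct j as [|j].
  - rewrite !coord_0.
    rewrite (rsum_ext _ (fun a => 1 * ind (Nat.leb (if b then pred t else t) (agree a w))))
      by (intros; destruct b; simpl; [rewrite leb_S_pred|]; unfold coord, sgn, ind; simpl; ring).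
    rewrite (rsum_ext (fun a => ind (Nat.leb t (agree (false :: a) (b :: w))) * sgn false)
                      (fun a => (-1) * ind (Nat.leb (if b then t else pred t) (agree a w))))
      by (intros; destruct b; simpl; [|rewrite leb_S_pred]; unfold coord, sgn, ind; simpl; ring).
    rewrite !rsum_scal, !count_U by auto. simpl W. destruct b; simpl; ring.
  - rewrite !coord_S.
    assert (Hd : (j < d)%nat) by lia.
    rewrite (rsum_ext _ (fun a => ind (Nat.leb (if b then pred t else t) (agree a w)) * coord a j))
      by (intros; destruct b; simpl; [rewrite leb_S_pred|]; reflexivity).
    rewrite (rsum_ext (fun a => ind (Nat.leb t (agree (false :: a) (b :: w))) * coord (false :: a) (S j))
                      (fun a => ind (Nat.leb (if b then t else pred t) (agree a w)) * coord a j))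
      by (intros; destruct b; simpl; [|rewrite leb_S_pred]; reflexivity).
    rewrite !IHd by auto. destruct d; [lia|]. rewrite W_rec. destruct b; ring. Qed.

Lemma U_nonneg d t : 0 <= U d t.
Proof. revert t; induction d; intros t; simpl; [destruct (Nat.eqb t 0); lra|]. pose proof (IHd (pred t)); pose proof (IHd t). lra. Qed.

Lemma U_zero d t : (d < t)%nat -> U d t = 0.
Proof. revert t; induction d; intros t H; simpl.
  - destruct t; [lia|reflexivity].
  - rewrite !IHd by lia. ring. Qed.

Lemma U_total d : U d 0 = 2 ^ d.
Proof. induction d; simpl; [reflexivity|]. rewrite IHd; ring. Qed.

Lemma U_sym d t : (t <= S d)%nat -> U d t + U d (S d - t) = 2 ^ d.
Proof. revert t; induction d; intros t Ht.
  - destruct t as [|[|t]]; simpl; try lia; ring.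
  - destruct t as [|k].
    + rewrite Nat.sub_0_r. rewrite (U_zero (S d) (S (S d))) by lia. rewrite U_total. ring.
    + change (U (S d) (S k)) with (U d k + U d (S k)).
      replace (S (S d) - S k)%nat with (S d - k)%nat by lia.
      change (U (S d) (S d - k)) with (U d (pred (S d - k)) + U d (S d - k)).
      destruct (Nat.le_gt_cases k d) as [Hk|Hk].
      * pose proof (IHd k ltac:(lia)). pose proof (IHd (S k) ltac:(lia)).
        replace (pred (S d - k)) with (S d - S k)%nat by lia. simpl pow. lra.
      * assert (k = S d) by lia. subst k. replace (S d - S d)%nat with 0%nat by lia. simpl pred.
        rewrite (U_zero d (S (S d))) by lia. rewrite (U_zero d (S d)) by lia. rewrite U_total. simpl; ring. Qed.

Lemma C_n0 n : Binomial.C n 0 = 1.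
Proof. unfold Binomial.C. rewrite Nat.sub_0_r. simpl fact. simpl INR. field. apply INR_fact_neq_0. Qed.
Lemma C_nn n : Binomial.C n n = 1.
Proof. unfold Binomial.C. rewrite Nat.sub_diag. simpl fact. simpl INR. field. apply INR_fact_neq_0. Qed.

Lemma U_diff d t : (t <= d)%nat -> U d t - U d (S t) = Binomial.C d t.
Proof. revert t; induction d; intros t Ht.
  - assert (t = 0%nat) by lia. subst. simpl. rewrite C_n0. ring.
  - destruct t as [|k].
    + rewrite C_n0. change (U (S d) 0) with (U d 0 + U d 0). change (U (S d) 1) with (U d 0 + U d 1).
      pose proof (IHd 0%nat ltac:(lia)). rewrite C_n0 in H. lra.
    + change (U (S d) (S k)) with (U d k + U d (S k)).
      change (U (S d) (S (S k))) with (U d (S k) + U d (S (S k))).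
      pose proof (IHd k ltac:(lia)).
      destruct (Nat.lt_ge_cases k d) as [Hk|Hk].
      * pose proof (IHd (S k) ltac:(lia)). rewrite <- (pascal d k Hk). rewrite <- H, <- H0; ring.
      * assert (k = d) by lia. subst k. rewrite (U_zero d (S d)) in * by lia. rewrite (U_zero d (S (S d))) by lia.
        rewrite C_nn in H. rewrite C_nn. lra. Qed.

Lemma U_anti d t : U d (S t) <= U d t.
Proof. revert t; induction d; intros t; simpl.
  - destruct t; simpl; lra.
  - pose proof (IHd t). assert (U d t <= U d (pred t)) by (destruct t; simpl; [lra| apply IHd]). lra. Qed.

Lemma U_le1 d t : (1 <= t)%nat -> U d t <= U d 1.
Proof. intros H. induction t; [lia|]. destruct t; [lra|]. pose proof (U_anti d (S t)). pose proof (IHt ltac:(lia)). lra. Qed.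

Lemma U_ge1 d t : (t <= d)%nat -> 1 <= U d t.
Proof. revert t; induction d; intros t Ht.
  - assert (t = 0%nat) by lia. subst; simpl; lra.
  - simpl. destruct (Nat.le_gt_cases t d).
    + pose proof (IHd t H). pose proof (U_nonneg d (pred t)). lra.
    + assert (t = S d) by lia. subst. simpl. pose proof (IHd d (le_n d)). pose proof (U_nonneg d (S d)). lra. Qed.

Lemma U_compl_ge1 d t : (1 <= t)%nat -> 1 <= 2 ^ d - U d t.
Proof. intros H. rewrite <- U_total. pose proof (U_le1 d t H). pose proof (U_diff d 0 ltac:(lia)). rewrite C_n0 in H1. lra. Qed.

Lemma div2_even m : ((2 * m) / 2 = m)%nat.
Proof. pose proof (Nat.div_mod (2*m) 2). pose proof (Nat.mod_upper_bound (2*m) 2). lia. Qed.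
Lemma div2_odd m : ((2 * m + 1) / 2 = m)%nat.
Proof. pose proof (Nat.div_mod (2*m+1) 2). pose proof (Nat.mod_upper_bound (2*m+1) 2). lia. Qed.

Lemma parity_cases d : (exists m, d = (2 * m)%nat /\ Nat.even d = true) \/ (exists m, d = (2 * m + 1)%nat /\ Nat.even d = false).
Proof. destruct (Nat.Even_or_Odd d) as [[m Hm]|[m Hm]].
  - left. exists m. split; auto. apply Nat.even_spec. exists m; auto.
  - right. exists m. split; auto. rewrite <- Nat.negb_odd. rewrite (proj2 (Nat.odd_spec d)); auto. exists m; auto. Qed.

Lemma pow2_pred d : (1 <= d)%nat -> 2 ^ d = 2 * 2 ^ (d - 1).
Proof. intros H. destruct d; [lia|]. simpl. rewrite Nat.sub_0_r. reflexivity. Qed.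

Lemma U_Cd d : (1 <= d)%nat -> U d (S (d / 2)) = Cd d.
Proof. intros Hd. unfold Cd. destruct (parity_cases d) as [[m [-> He]]|[m [-> He]]]; rewrite He.
  - rewrite div2_even. pose proof (U_sym (2*m) m ltac:(lia)). replace (S (2*m) - m)%nat with (S m) in H by lia.
    pose proof (U_diff (2*m) m ltac:(lia)). rewrite (pow2_pred (2*m)) in H by lia. lra.
  - rewrite div2_odd. pose proof (U_sym (2*m+1) (S m) ltac:(lia)). replace (S (2*m+1) - S m)%nat with (S m) in H by lia.
    rewrite (pow2_pred (2*m+1)) in H by lia. lra. Qed.

Lemma W_md d : (1 <= d)%nat -> W d (S (d / 2)) = Binomial.C (d - 1) (d / 2).
Proof. intros Hd. destruct d; [lia|]. simpl W. replace (S d - 1)%nat with d by lia. simpl pred. apply U_diff.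
  pose proof (Nat.div_mod (S d) 2). pose proof (Nat.mod_upper_bound (S d) 2). lia. Qed.

Lemma Cd_pos d : (1 <= d)%nat -> 1 <= Cd d /\ 1 <= 2 ^ d - Cd d.
Proof. intros Hd. rewrite <- U_Cd by auto. split.
  - apply U_ge1. pose proof (Nat.div_mod d 2). pose proof (Nat.mod_upper_bound d 2). lia.
  - apply U_compl_ge1. lia. Qed.

Lemma Bd_pos d : (1 <= d)%nat -> 0 < Binomial.C (d - 1) (d / 2).
Proof. intros. unfold Binomial.C. apply Rdiv_lt_0_compat; [apply INR_fact_lt_0| apply Rmult_lt_0_compat; apply INR_fact_lt_0]. Qed.

Lemma md_eq d : Binomial.C (d - 1) (if Nat.even d then d / 2 else (d - 1) / 2) = Binomial.C (d - 1) (d / 2).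
Proof. destruct (parity_cases d) as [[m [-> He]]|[m [-> He]]]; rewrite He; auto.
  replace (2 * m + 1 - 1)%nat with (2 * m)%nat by lia. rewrite div2_even, div2_odd. reflexivity. Qed.

Lemma prob_V_S d x b w : prob_V (S d) x (b :: w) = (/ 2 + / 2 * x 0%nat * sgn b) * prob_V d (fun j => x (S j)) w.
Proof. unfold prob_V. rewrite rprod_seqS. reflexivity. Qed.

Lemma pV_sum d x : rsum (prob_V d x) (all_signs d) = 1.
Proof. revert x; induction d; intros x.
  - simpl. rewrite rsum_cons, rsum_nil. unfold prob_V, rprod; simpl; ring.
  - rewrite all_signs_S, rsum_app, !rsum_map.
    rewrite (rsum_ext (fun a => prob_V (S d) x (true :: a)) (fun a => (/2 + /2 * x 0%nat * sgn true) * prob_V d (fun j => x (S j)) a)) by (intros; apply prob_V_S).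
    rewrite (rsum_ext (fun a => prob_V (S d) x (false :: a)) (fun a => (/2 + /2 * x 0%nat * sgn false) * prob_V d (fun j => x (S j)) a)) by (intros; apply prob_V_S).
    rewrite !rsum_scal, IHd. unfold sgn; field. Qed.

Lemma pV_mean d x j : (j < d)%nat -> rsum (fun w => prob_V d x w * coord w j) (all_signs d) = x j.
Proof. revert x j; induction d; intros x j Hj; [lia|].
  rewrite all_signs_S, rsum_app, !rsum_map. destruct j as [|j].
  - rewrite (rsum_ext (fun a => prob_V (S d) x (true :: a) * coord (true :: a) 0) (fun a => (/2 + /2 * x 0%nat * sgn true) * sgn true * prob_V d (fun j => x (S j)) a)) by (intros; rewrite prob_V_S; simpl coord; unfold coord; simpl; ring).
    rewrite (rsum_ext (fun a => prob_V (S d) x (false :: a) * coord (false :: a) 0) (fun a => (/2 + /2 * x 0%nat * sgn false) * sgn false * prob_V d (fun j => x (S j)) a)) by (intros; rewrite prob_V_S; unfold coord; simpl; ring).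
    rewrite !rsum_scal, pV_sum. unfold sgn; field.
  - rewrite (rsum_ext (fun a => prob_V (S d) x (true :: a) * coord (true :: a) (S j)) (fun a => (/2 + /2 * x 0%nat * sgn true) * (prob_V d (fun j => x (S j)) a * coord a j))) by (intros; rewrite prob_V_S; rewrite coord_S; ring).
    rewrite (rsum_ext (fun a => prob_V (S d) x (false :: a) * coord (false :: a) (S j)) (fun a => (/2 + /2 * x 0%nat * sgn false) * (prob_V d (fun j => x (S j)) a * coord a j))) by (intros; rewrite prob_V_S; rewrite coord_S; ring).
    rewrite !rsum_scal, IHd by lia. unfold sgn; field. Qed.

Lemma coord_bound s j : coord s j = 1 \/ coord s j = -1.
Proof. unfold coord, sgn. destruct (nth j s false); auto. Qed.

Lemma pV_nonneg d x w : (forall j, (j < d)%nat -> -1 <= x j <= 1) -> 0 <= prob_V d x w.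
Proof. intros Hx. unfold prob_V. apply rprod_nonneg. intros j Hj. apply in_seq in Hj.
  destruct (Hx j ltac:(lia)). destruct (coord_bound w j) as [->| ->]; lra. Qed.

Lemma card_Tplus_eq d B w : (1 <= d)%nat -> 0 < B -> length w = d -> card_Tplus d B w = Cd d.
Proof. intros Hd HB Hw. unfold card_Tplus. rewrite rsum_length_filter.
  rewrite (rsum_ext_in _ (fun s => ind (Nat.leb (S (d/2)) (agree s w)))).
  - rewrite count_U by auto. apply U_Cd; auto.
  - intros s Hs. rewrite (cond_agree d B s w true false) by (auto; apply all_signs_length; auto).
    unfold ind. destruct (Nat.leb _ _); reflexivity. Qed.

Lemma rsum_one d : rsum (fun _ : list bool => 1) (all_signs d) = 2 ^ d.
Proof. rewrite <- U_total. rewrite <- (count_U d (repeat true d) 0) by (apply repeat_length). apply rsum_ext. reflexivity. Qed.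

Lemma card_Tminus_eq d B w : (1 <= d)%nat -> 0 < B -> length w = d -> card_Tminus d B w = 2 ^ d - Cd d.
Proof. intros Hd HB Hw. unfold card_Tminus. rewrite rsum_length_filter.
  rewrite (rsum_ext_in _ (fun s => 1 - ind (Nat.leb (S (d/2)) (agree s w)))).
  - rewrite rsum_minus, rsum_one, count_U by auto. rewrite U_Cd; auto.
  - intros s Hs. rewrite (cond_agree d B s w false true) by (auto; apply all_signs_length; auto).
    unfold ind. destruct (Nat.leb _ _); ring. Qed.

Definition gsel d al B s w : R :=
  if Rlt_dec 0 (dotBy d B s w) then al / card_Tplus d B w else (1 - al) / card_Tminus d B w.

Lemma gsel_eq d al B s w : (1 <= d)%nat -> 0 < B -> length w = d -> In s (all_signs d) ->
  gsel d al B s w = ind (Nat.leb (S (d/2)) (agree s w)) * (al / Cd d) + (1 - ind (Nat.leb (S (d/2)) (agree s w))) * ((1 - al) / (2 ^ d - Cd d)).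
Proof. intros Hd HB Hw Hs. unfold gsel. rewrite card_Tplus_eq, card_Tminus_eq by auto.
  rewrite (cond_agree d B s w) by (auto; apply all_signs_length; auto). unfold ind. destruct (Nat.leb _ _); ring. Qed.

Lemma gsel_sum d al B w : (1 <= d)%nat -> 0 < B -> length w = d ->
  rsum (fun s => gsel d al B s w) (all_signs d) = 1.
Proof. intros Hd HB Hw. rewrite (rsum_ext_in _ _ _ (fun s Hs => gsel_eq d al B s w Hd HB Hw Hs)).
  rewrite rsum_plus, rsum_scal_r, rsum_scal_r, rsum_minus, rsum_one, count_U by auto. rewrite U_Cd by auto.
  destruct (Cd_pos d Hd). field. lra. Qed.

Lemma W_0 d : (1 <= d)%nat -> W d 0 = 0.
Proof. intros. destruct d; [lia|]. simpl. ring. Qed.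

Lemma gsel_mean d al B w j : (1 <= d)%nat -> 0 < B -> length w = d -> (j < d)%nat ->
  rsum (fun s => gsel d al B s w * (B * coord s j)) (all_signs d) =
  B * Binomial.C (d - 1) (d / 2) * (al / Cd d - (1 - al) / (2 ^ d - Cd d)) * coord w j.
Proof. intros Hd HB Hw Hj.
  rewrite (rsum_ext_in _ (fun s => (B * (al / Cd d) - B * ((1 - al) / (2 ^ d - Cd d))) * (ind (Nat.leb (S (d/2)) (agree s w)) * coord s j) + B * ((1 - al) / (2 ^ d - Cd d)) * (ind (Nat.leb 0 (agree s w)) * coord s j))).
  - rewrite rsum_plus, !rsum_scal, !coord_W by auto. rewrite W_0, W_md by auto. ring.
  - intros s Hs. rewrite gsel_eq by auto. replace (ind (Nat.leb 0 (agree s w))) with 1 by reflexivity. ring. Qed.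

Definition md d := Binomial.C (d - 1) (d / 2).

Lemma B_unified d eps delta : B_ed d eps delta = (2 ^ d + Cd d * (exp eps - 1)) / (md d * (exp eps + 2 ^ d * delta - 1)).
Proof. unfold B_ed, md. pose proof (md_eq d) as H. destruct (Nat.even d); [reflexivity| rewrite <- H; reflexivity]. Qed.

Lemma exp_gt1 eps : 0 < eps -> 1 + eps <= exp eps.
Proof. intros; apply exp_ineq1_le. Qed.

Lemma div_nonneg a b : 0 <= a -> 0 < b -> 0 <= a / b.
Proof. intros; unfold Rdiv; apply Rmult_le_pos; [auto| left; apply Rinv_0_lt_compat; auto]. Qed.
Lemma div_le1 a b : 0 < b -> a <= b -> a / b <= 1.
Proof. intros. unfold Rdiv. replace 1 with (b * / b) by (field; lra). apply Rmult_le_compat_r; [left; apply Rinv_0_lt_compat|]; auto. Qed.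

Section Params.
Variables (d : nat) (eps delta : R).
Hypothesis Hd : (1 <= d)%nat.
Hypothesis Heps : 0 < eps.
Hypothesis Hdel : 0 <= delta.
Hypothesis HCd : Cd d * delta < 1.

Lemma pow2_pos : 0 < 2 ^ d.
Proof. apply pow_lt; lra. Qed.

Lemma B_pos : 0 < B_ed d eps delta.
Proof. rewrite B_unified. pose proof (exp_gt1 eps Heps). destruct (Cd_pos d Hd). pose proof pow2_pos.
  pose proof (Bd_pos d Hd). fold (md d) in H3. apply Rdiv_lt_0_compat.
  - nra.
  - apply Rmult_lt_0_compat; auto. nra. Qed.

Lemma alpha_range : 0 <= alpha_ed d eps delta <= 1.
Proof. pose proof (exp_gt1 eps Heps). destruct (Cd_pos d Hd). pose proof pow2_pos. unfold alpha_ed.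
  destruct (Nat.even d).
  - assert (0 < (exp eps - 1) * Cd d + 2 ^ d) by nra. split.
    + apply div_nonneg; auto. assert (0 <= delta * Cd d * (2^d - Cd d)) by (apply Rmult_le_pos; [apply Rmult_le_pos|]; lra). nra.
    + apply div_le1; auto. assert (0 <= (1 - Cd d * delta) * (2^d - Cd d)) by (apply Rmult_le_pos; lra). nra.
  - split.
    + apply div_nonneg; nra.
    + apply div_le1; nra. Qed.

Lemma unbiased_const :
  B_ed d eps delta * md d * (alpha_ed d eps delta / Cd d - (1 - alpha_ed d eps delta) / (2 ^ d - Cd d)) = 1.
Proof. rewrite B_unified. pose proof (exp_gt1 eps Heps). destruct (Cd_pos d Hd). pose proof pow2_pos.
  pose proof (Bd_pos d Hd). fold (md d) in H3. unfold alpha_ed.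
  destruct (parity_cases d) as [[m [Hm He]]|[m [Hm He]]]; rewrite He.
  - assert (0 < (exp eps - 1) * Cd d + 2 ^ d) by nra.
    field. repeat split; nra.
  - unfold Cd in *. rewrite He in *. rewrite (pow2_pred d Hd) in *.
    field. repeat split; nra. Qed.
End Params.

Lemma div_nonneg' a b : 0 <= a -> 0 <= b -> 0 <= a / b.
Proof. intros Ha Hb. destruct Hb as [Hb| <-]. apply div_nonneg; auto. unfold Rdiv; rewrite Rinv_0; lra. Qed.

Section Mech.
Variables (d : nat) (eps delta : R).
Hypothesis Hd : (1 <= d)%nat.
Hypothesis Heps : 0 < eps.
Hypothesis Hdel : 0 <= delta.
Hypothesis HCd : Cd d * delta < 1.

Let al := alpha_ed d eps delta.
Let B := B_ed d eps delta.

Lemma mech_unfold x s : mech_pmf d al B x s = rsum (fun w => prob_V d x w * gsel d al B s w) (all_signs d).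
Proof. reflexivity. Qed.

Lemma mech_sum x : rsum (mech_pmf d al B x) (all_signs d) = 1.
Proof. rewrite (rsum_ext _ _ _ (mech_unfold x)). rewrite rsum_swap.
  rewrite (rsum_ext_in _ (fun w => prob_V d x w)). apply pV_sum.
  intros w Hw. rewrite rsum_scal. rewrite gsel_sum; auto. ring. apply B_pos; auto. apply all_signs_length; auto. Qed.

Lemma mech_mean x j : (j < d)%nat -> rsum (fun s => mech_pmf d al B x s * (B * coord s j)) (all_signs d) = x j.
Proof. intros Hj. rewrite (rsum_ext _ (fun s => rsum (fun w => prob_V d x w * (gsel d al B s w * (B * coord s j))) (all_signs d))).
  2:{ intros s. rewrite mech_unfold, <- rsum_scal_r. apply rsum_ext; intros; ring. }
  rewrite rsum_swap. rewrite (rsum_ext_in _ (fun w => prob_V d x w * coord w j)). apply pV_mean; auto.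
  intros w Hw. rewrite rsum_scal. rewrite gsel_mean; auto. fold (md d). unfold B, al. rewrite unbiased_const; auto. ring.
  apply B_pos; auto. apply all_signs_length; auto. Qed.

Lemma mech_nonneg x s : (forall j, (j < d)%nat -> -1 <= x j <= 1) -> 0 <= mech_pmf d al B x s.
Proof. intros Hx. rewrite mech_unfold. apply rsum_nonneg. intros w _. apply Rmult_le_pos. apply pV_nonneg; auto.
  unfold gsel. pose proof (alpha_range d eps delta Hd Heps Hdel HCd). fold al in H.
  destruct (Rlt_dec _ _); apply div_nonneg'; try lra; unfold card_Tplus, card_Tminus; apply pos_INR. Qed.

Lemma B_ge1 : 1 <= B.
Proof. pose proof (mech_mean (fun _ => 1) 0%nat ltac:(lia)).
  assert (rsum (fun s => mech_pmf d al B (fun _ => 1) s * (B * coord s 0)) (all_signs d) <= rsum (fun s => mech_pmf d al B (fun _ => 1) s * B) (all_signs d)).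
  { apply rsum_le. intros s _. pose proof (mech_nonneg (fun _ => 1) s ltac:(intros; lra)). assert (0 < B) by (apply B_pos; auto).
    destruct (coord_bound s 0) as [-> | ->]; nra. }
  rewrite rsum_scal_r, mech_sum in H0. lra. Qed.
End Mech.

Lemma all_outcomes_S d N : all_outcomes d (S N) = concat (map (fun s => map (cons s) (all_outcomes d N)) (all_signs d)).
Proof. reflexivity. Qed.

Lemma product_lemma d N (h : nat -> list bool -> R) :
  rsum (fun ys => rprod (fun i => h i (nth i ys [])) (seq 0 N)) (all_outcomes d N) =
  rprod (fun i => rsum (h i) (all_signs d)) (seq 0 N).
Proof. revert h; induction N; intros h.
  - simpl. rewrite rsum_cons, rsum_nil. unfold rprod; simpl; ring.
  - rewrite all_outcomes_S, rsum_concat, rsum_map. rewrite rprod_seqS.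
    rewrite (rsum_ext _ (fun s => h 0%nat s * rsum (fun ys => rprod (fun i => h (S i) (nth i ys [])) (seq 0 N)) (all_outcomes d N))).
    + rewrite rsum_scal_r, (IHN (fun i => h (S i))). reflexivity.
    + intros s. rewrite rsum_map, <- rsum_scal. apply rsum_ext. intros ys. rewrite rprod_seqS. reflexivity. Qed.

Lemma exp_bound v : Rabs v <= 1 -> exp v <= 1 + v + 2 * v ^ 2.
Proof. intros Hv. assert (Hv' : -1 <= v <= 1) by (unfold Rabs in Hv; destruct (Rcase_abs v); lra).
  set (u := v / 2). assert (Hu : -1/2 <= u <= 1/2) by (unfold u; lra).
  pose proof (exp_ineq1_le (- u)) as E1. pose proof (exp_pos u) as E2. pose proof (exp_pos (-u)) as E3.
  clear Hv; assert (Hprod : exp u * exp (- u) = 1) by (rewrite <- exp_plus; replace (u + - u) with 0 by ring; apply exp_0).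
  assert (Hq : exp u * (1 - u) <= 1) by nra.
  assert (Hv2 : exp v = exp u * exp u) by (rewrite <- exp_plus; unfold u; f_equal; field).
  rewrite Hv2. replace v with (2 * u) by (unfold u; field).
  assert (H1 : (exp u * (1 - u)) ^ 2 <= 1).
  { assert (0 <= exp u * (1 - u)) by nra. nra. }
  assert (H2 : 1 <= (1 - u) ^ 2 * (1 + 2 * u + 8 * u ^ 2)).
  { assert (0 <= u ^ 2 * (5 - 14 * u + 8 * u ^ 2)) by (apply Rmult_le_pos; nra). nra. }
  assert (H3 : 0 < (1 - u) ^ 2) by nra.
  assert (H4 : (exp u * exp u) * (1 - u) ^ 2 <= (1 + 2 * u + 8 * u ^ 2) * (1 - u) ^ 2) by nra.
  apply Rmult_le_reg_r in H4; auto. nra. Qed.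

Lemma hoeff {A} (L : list A) (p Y : A -> R) (c lam : R) :
  (forall a, In a L -> 0 <= p a) -> rsum p L = 1 -> rsum (fun a => p a * Y a) L = 0 ->
  (forall a, In a L -> Rabs (Y a) <= c) -> Rabs lam * c <= 1 ->
  rsum (fun a => p a * exp (lam * Y a)) L <= exp (2 * lam ^ 2 * c ^ 2).
Proof. intros Hp Hs Hm HY Hl.
  apply Rle_trans with (rsum (fun a => p a * 1 + lam * (p a * Y a) + 2 * lam ^ 2 * c ^ 2 * p a) L).
  - apply rsum_le. intros a Ha. pose proof (HY a Ha). pose proof (Hp a Ha).
    assert (Hc : 0 <= c) by (pose proof (Rabs_pos (Y a)); lra).
    assert (Rabs (lam * Y a) <= 1).
    { rewrite Rabs_mult. apply Rle_trans with (Rabs lam * c); auto. apply Rmult_le_compat_l; auto. apply Rabs_pos. }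
    pose proof (exp_bound _ H1).
    assert ((lam * Y a) ^ 2 <= lam ^ 2 * c ^ 2).
    { rewrite <- !Rsqr_pow2. rewrite Rsqr_mult. apply Rmult_le_compat_l; [apply Rle_0_sqr|].
      apply Rsqr_le_abs_1. rewrite (Rabs_pos_eq c); auto. }
    nra.
  - rewrite !rsum_plus, rsum_scal, rsum_scal, Hm. rewrite (rsum_ext (fun a => p a * 1) p) by (intros; ring). rewrite Hs.
    pose proof (exp_ineq1_le (2 * lam ^ 2 * c ^ 2)). lra. Qed.

Definition cr r := Binomial.C (2 * r) r.

Lemma fact_INR_S n : INR (fact (S n)) = INR (S n) * INR (fact n).
Proof. change (fact (S n)) with (S n * fact n)%nat. apply mult_INR. Qed.

Lemma cr_S r : cr (S r) = cr r * (2 * (2 * INR r + 1) / (INR r + 1)).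
Proof. unfold cr, Binomial.C.
  replace (2 * S r)%nat with (S (S (2 * r))) by lia.
  replace (S (S (2 * r)) - S r)%nat with (S r) by lia. replace (2 * r - r)%nat with r by lia.
  rewrite !fact_INR_S. rewrite !S_INR, mult_INR. simpl INR.
  pose proof (INR_fact_lt_0 r). pose proof (INR_fact_lt_0 (2*r)). pose proof (pos_INR r).
  field. repeat split; lra. Qed.

Lemma C_odd r : Binomial.C (2 * r + 1) (r + 1) = cr r * ((2 * INR r + 1) / (INR r + 1)).
Proof. unfold cr, Binomial.C.
  replace (2 * r + 1)%nat with (S (2 * r)) by lia.
  replace (S (2 * r) - (r + 1))%nat with r by lia. replace (2 * r - r)%nat with r by lia.
  replace (r + 1)%nat with (S r) by lia.
  rewrite !fact_INR_S. rewrite !S_INR, mult_INR. simpl INR.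
  pose proof (INR_fact_lt_0 r). pose proof (INR_fact_lt_0 (2*r)). pose proof (pos_INR r).
  field. repeat split; lra. Qed.

Lemma cr_pos r : 0 < cr r.
Proof. unfold cr, Binomial.C. apply Rdiv_lt_0_compat; [apply INR_fact_lt_0| apply Rmult_lt_0_compat; apply INR_fact_lt_0]. Qed.


Lemma step_real X c x : 1 <= x -> 0 < c -> X ^ 2 <= 4 * x * c ^ 2 ->
  (2 ^ 2 * X) ^ 2 <= 4 * (x + 1) * (c * (2 * (2 * x + 1) / (x + 1))) ^ 2.
Proof. intros Hx Hc H.
  replace (4 * (x + 1) * (c * (2 * (2 * x + 1) / (x + 1))) ^ 2) with (16 * c ^ 2 * (2 * x + 1) ^ 2 / (x + 1)) by (field; lra).
  apply (Rmult_le_reg_r (x + 1)); [lra|]. unfold Rdiv. rewrite Rmult_assoc, Rinv_l, Rmult_1_r by lra.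
  assert (4 * x * (x + 1) <= (2 * x + 1) ^ 2) by nra.
  assert (0 <= c ^ 2) by nra. nra. Qed.

Lemma cr_bound r : (1 <= r)%nat -> (2 ^ (2 * r)) ^ 2 <= 4 * INR r * cr r ^ 2.
Proof. intros Hr. induction r; [lia|]. destruct r.
  - unfold cr, Binomial.C. simpl. lra.
  - specialize (IHr ltac:(lia)). set (r' := S r) in *. rewrite cr_S.
    replace (2 * S r')%nat with (2 + 2 * r')%nat by lia. rewrite pow_add, S_INR.
    apply step_real; auto. unfold r'; rewrite S_INR; pose proof (pos_INR r); lra. apply cr_pos. Qed.

Lemma even_real X c x : 0 <= x -> 0 < c -> (x = 0 /\ c = 1 /\ X = 1 \/ 1 <= x /\ X ^ 2 <= 4 * x * c ^ 2) ->
  (2 ^ 2 * X) ^ 2 <= 8 * (2 * x + 2) * (c * ((2 * x + 1) / (x + 1))) ^ 2.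
Proof. intros Hx Hc H.
  replace (8 * (2 * x + 2) * (c * ((2 * x + 1) / (x + 1))) ^ 2) with (16 * c ^ 2 * (2 * x + 1) ^ 2 / (x + 1)) by (field; lra).
  apply (Rmult_le_reg_r (x + 1)); [lra|]. unfold Rdiv. rewrite Rmult_assoc, Rinv_l, Rmult_1_r by lra.
  destruct H as [[-> [-> ->]]|[H1 H2]]; [lra|].
  assert (4 * x * (x + 1) <= (2 * x + 1) ^ 2) by nra.
  assert (0 <= c ^ 2) by nra. nra. Qed.

Lemma odd_real X c x : 0 <= x -> 0 < c -> (x = 0 /\ c = 1 /\ X = 1 \/ 1 <= x /\ X ^ 2 <= 4 * x * c ^ 2) ->
  (2 * X) ^ 2 <= 8 * (2 * x + 1) * c ^ 2.
Proof. intros Hx Hc H. destruct H as [[-> [-> ->]]|[H1 H2]]; [lra|]. nra. Qed.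

Lemma cr_cases r : INR r = 0 /\ cr r = 1 /\ 2 ^ (2 * r) = 1 \/ 1 <= INR r /\ (2 ^ (2 * r)) ^ 2 <= 4 * INR r * cr r ^ 2.
Proof. destruct r.
  - left. unfold cr, Binomial.C. simpl. repeat split; lra.
  - right. split. rewrite S_INR; pose proof (pos_INR r); lra. apply cr_bound; lia. Qed.

Lemma md_bound d : (1 <= d)%nat -> (2 ^ d) ^ 2 <= 8 * INR d * md d ^ 2.
Proof. intros Hd. unfold md. destruct (parity_cases d) as [[m [-> _]]|[m [-> _]]].
  - destruct m as [|r]; [lia|]. replace (2 * S r - 1)%nat with (2 * r + 1)%nat by lia.
    replace (2 * S r / 2)%nat with (r + 1)%nat by (rewrite div2_even; lia). rewrite C_odd.
    replace (2 * S r)%nat with (2 + 2 * r)%nat by lia. rewrite pow_add.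
    replace (INR (2 + 2 * r)) with (2 * INR r + 2) by (rewrite plus_INR, mult_INR; simpl; ring).
    apply even_real. apply pos_INR. apply cr_pos. apply cr_cases.
  - replace (2 * m + 1 - 1)%nat with (2 * m)%nat by lia. rewrite div2_odd. fold (cr m).
    rewrite pow_add, pow_1, Rmult_comm.
    replace (INR (2 * m + 1)) with (2 * INR m + 1) by (rewrite plus_INR, mult_INR; simpl; ring).
    apply odd_real. apply pos_INR. apply cr_pos. apply cr_cases. Qed.

Lemma exp_pow_N a n : exp a ^ n = exp (INR n * a).
Proof. induction n; simpl. rewrite Rmult_0_l, exp_0; reflexivity.
  rewrite IHn, <- exp_plus. f_equal. destruct n; simpl; ring. Qed.

Lemma exp_le_mono a b : a <= b -> exp a <= exp b.
Proof. intros [H| H]; [left; apply exp_increasing; auto| rewrite H; lra]. Qed.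

Lemma rsum_const {A} c (l : list A) : rsum (fun _ => c) l = c * INR (length l).
Proof. induction l; simpl length; [unfold rsum; simpl; ring|]. rewrite rsum_cons, IHl, S_INR; ring. Qed.

Lemma fold_max_gt (f : nat -> R) l T : 0 <= T -> T < fold_right Rmax 0 (map f l) -> exists j, In j l /\ T < f j.
Proof. induction l; simpl; intros HT H; [lra|]. unfold Rmax in H at 1. destruct (Rle_dec _ _).
  - destruct (IHl HT H) as [j [Hj Hj']]. exists j; auto.
  - exists a; auto. Qed.

Section Prob.
Variables (d N : nat) (eps delta : R) (x : nat -> nat -> R).
Hypothesis Hd : (1 <= d)%nat.
Hypothesis Heps : 0 < eps.
Hypothesis Hdel : 0 <= delta.
Hypothesis HCd : Cd d * delta < 1.
Hypothesis Hx : forall i j, (i < N)%nat -> (j < d)%nat -> -1 <= x i j <= 1.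

Let al := alpha_ed d eps delta.
Let B := B_ed d eps delta.
Let J := joint_pmf d N al B x.

Definition Sj (ys : list (list bool)) (j : nat) : R :=
  rsum (fun i => B_ed d eps delta * coord (nth i ys []) j - x i j) (seq 0 N).

Lemma J_sum : rsum J (all_outcomes d N) = 1.
Proof. unfold J, joint_pmf. rewrite (product_lemma d N (fun i s => mech_pmf d al B (x i) s)).
  rewrite (rprod_ext_in _ (fun _ => 1)). apply rprod_const1. intros i _. apply mech_sum; auto. Qed.

Lemma J_nonneg ys : 0 <= J ys.
Proof. unfold J, joint_pmf. apply rprod_nonneg. intros i Hi. apply in_seq in Hi. apply mech_nonneg; auto.
  intros; apply Hx; lia. Qed.

Lemma mgf_bound mu j : (j < d)%nat -> Rabs mu * (B + 1) <= 1 ->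
  rsum (fun ys => J ys * exp (mu * Sj ys j)) (all_outcomes d N) <= exp (INR N * (2 * mu ^ 2 * (B + 1) ^ 2)).
Proof. intros Hj Hmu.
  rewrite (rsum_ext _ (fun ys => rprod (fun i => (fun i s => mech_pmf d al B (x i) s * exp (mu * (B * coord s j - x i j))) i (nth i ys [])) (seq 0 N))).
  2:{ intros ys. unfold J, joint_pmf, Sj. rewrite <- rsum_scal, exp_rsum, <- rprod_mult. reflexivity. }
  rewrite (product_lemma d N (fun i s => mech_pmf d al B (x i) s * exp (mu * (B * coord s j - x i j)))). apply Rle_trans with (rprod (fun _ => exp (2 * mu ^ 2 * (B + 1) ^ 2)) (seq 0 N)).
  2:{ rewrite rprod_const, length_seq, exp_pow_N. lra. }
  apply rprod_le. intros i Hi. apply in_seq in Hi. split.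
  - apply rsum_nonneg. intros s _. apply Rmult_le_pos; [apply mech_nonneg; auto; intros; apply Hx; lia| left; apply exp_pos].
  - assert (HB : 0 < B) by (apply B_pos; auto).
    apply hoeff; auto.
    + intros s _. apply mech_nonneg; auto; intros; apply Hx; lia.
    + apply mech_sum; auto.
    + rewrite (rsum_ext _ (fun s => mech_pmf d al B (x i) s * (B * coord s j) - x i j * mech_pmf d al B (x i) s)) by (intros; ring).
      rewrite rsum_minus, rsum_scal. unfold al, B. rewrite mech_mean, mech_sum by auto. ring.
    + intros s _. destruct (Hx i j ltac:(lia) Hj). destruct (coord_bound s j) as [-> | ->]; unfold Rabs; destruct (Rcase_abs _); lra. Qed.

Lemma Zj_Xj ys j : Zj d N eps delta ys j - Xj N x j = / INR N * Sj ys j.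
Proof. unfold Zj, Xj, Sj. rewrite rsum_minus. ring. Qed.

Lemma tail_bound (T lam : R) : 0 <= T -> 0 < lam -> lam * (B + 1) <= 1 -> (1 <= N)%nat ->
  rsum (fun ys => J ys * indic (maxdev d N eps delta x ys <= T)) (all_outcomes d N) >=
  1 - 2 * INR d * exp (- lam * INR N * T + INR N * (2 * lam ^ 2 * (B + 1) ^ 2)).
Proof. intros HT Hlam Hlc HN.
  set (F := fun ys => rsum (fun j => exp (lam * Sj ys j - lam * INR N * T) + exp ((- lam) * Sj ys j - lam * INR N * T)) (seq 0 d)).
  assert (HF : forall ys, 1 - indic (maxdev d N eps delta x ys <= T) <= F ys).
  { intros ys. assert (0 <= F ys) by (apply rsum_nonneg; intros; pose proof (exp_pos (lam * Sj ys a - lam * INR N * T)); pose proof (exp_pos (- lam * Sj ys a - lam * INR N * T)); lra).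
    unfold indic. destruct (excluded_middle_informative _) as [H1|H1]; [lra|].
    apply Rnot_le_lt in H1. unfold maxdev in H1. apply fold_max_gt in H1; auto. destruct H1 as [j [Hj Hgt]].
    rewrite Zj_Xj in Hgt. rewrite Rabs_mult, Rabs_inv, (Rabs_pos_eq (INR N)) in Hgt by apply pos_INR.
    assert (HNp : 0 < INR N) by (apply lt_0_INR; lia).
    assert (HS : INR N * T < Rabs (Sj ys j)).
    { apply (Rmult_lt_reg_l (/ INR N)). apply Rinv_0_lt_compat; auto. rewrite <- Rmult_assoc, Rinv_l, Rmult_1_l; lra. }
    apply Rle_trans with (exp (lam * Sj ys j - lam * INR N * T) + exp (- lam * Sj ys j - lam * INR N * T)).
    - unfold Rabs in HS. destruct (Rcase_abs _).
      + assert (0 < - lam * Sj ys j - lam * INR N * T) by nra. pose proof (exp_ineq1_le (- lam * Sj ys j - lam * INR N * T)). pose proof (exp_pos (lam * Sj ys j - lam * INR N * T)). lra.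
      + assert (0 < lam * Sj ys j - lam * INR N * T) by nra. pose proof (exp_ineq1_le (lam * Sj ys j - lam * INR N * T)). pose proof (exp_pos (- lam * Sj ys j - lam * INR N * T)). lra.
    - unfold F. apply (rsum_ge_elem (fun j => exp (lam * Sj ys j - lam * INR N * T) + exp (- lam * Sj ys j - lam * INR N * T))); auto.
      intros; pose proof (exp_pos (lam * Sj ys b - lam * INR N * T)); pose proof (exp_pos (- lam * Sj ys b - lam * INR N * T)); lra. }
  assert (H1 : rsum (fun ys => J ys * indic (maxdev d N eps delta x ys <= T)) (all_outcomes d N) >= 1 - rsum (fun ys => J ys * F ys) (all_outcomes d N)).
  { rewrite <- J_sum. apply Rle_ge. rewrite <- rsum_minus. apply rsum_le. intros ys _. pose proof (HF ys). pose proof (J_nonneg ys). nra. }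
  assert (H2 : rsum (fun ys => J ys * F ys) (all_outcomes d N) <= 2 * INR d * exp (- lam * INR N * T + INR N * (2 * lam ^ 2 * (B + 1) ^ 2))).
  { unfold F. rewrite (rsum_ext _ (fun ys => rsum (fun j => exp (- lam * INR N * T) * (J ys * exp (lam * Sj ys j)) + exp (- lam * INR N * T) * (J ys * exp ((- lam) * Sj ys j))) (seq 0 d))).
    2:{ intros ys. rewrite <- rsum_scal. apply rsum_ext. intros j.
        replace (lam * Sj ys j - lam * INR N * T) with (lam * Sj ys j + (- lam * INR N * T)) by ring.
        replace (- lam * Sj ys j - lam * INR N * T) with (- lam * Sj ys j + (- lam * INR N * T)) by ring.
        rewrite !exp_plus. ring. }
    rewrite rsum_swap.
    apply Rle_trans with (rsum (fun _ => 2 * exp (- lam * INR N * T + INR N * (2 * lam ^ 2 * (B + 1) ^ 2))) (seq 0 d)).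
    - apply rsum_le. intros j Hj. apply in_seq in Hj. rewrite rsum_plus, !rsum_scal.
      assert (Rabs lam * (B + 1) <= 1) by (rewrite Rabs_pos_eq; lra).
      assert (Rabs (- lam) * (B + 1) <= 1) by (rewrite Rabs_Ropp, Rabs_pos_eq; lra).
      pose proof (mgf_bound lam j ltac:(lia) H) as M1. pose proof (mgf_bound (- lam) j ltac:(lia) H0) as M2.
      replace ((- lam) ^ 2) with (lam ^ 2) in M2 by ring.
      rewrite exp_plus. pose proof (exp_pos (- lam * INR N * T)). nra.
    - rewrite rsum_const, length_seq. lra. }
  lra. Qed.
End Prob.

Lemma BE_bound d eps delta : (1 <= d)%nat -> 0 < eps <= 1 -> 0 <= delta -> Cd d * delta < 1 ->
  (B_ed d eps delta * (eps + 2 ^ d * delta)) ^ 2 <= 72 * INR d.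
Proof. intros Hd [Heps Heps1] Hdel HCd.
  pose proof (exp_gt1 eps Heps) as He1. pose proof (Cd_pos d Hd) as [HC1 HC2]. pose proof (pow2_pos d) as HP.
  pose proof (Bd_pos d Hd) as Hm. fold (md d) in Hm.
  assert (He3 : exp eps <= 3) by (pose proof (exp_le_mono eps 1 Heps1); pose proof exp_le_3; lra).
  assert (HBm : B_ed d eps delta * (eps + 2 ^ d * delta) * md d <= 3 * 2 ^ d).
  { rewrite B_unified.
    set (P := 2 ^ d) in *. set (C := Cd d) in *. set (m := md d) in *. set (e := exp eps) in *.
    assert (HD : 0 < e + P * delta - 1) by nra.
    replace ((P + C * (e - 1)) / (m * (e + P * delta - 1)) * (eps + P * delta) * m) with
      ((P + C * (e - 1)) * ((eps + P * delta) / (e + P * delta - 1))) by (field; lra).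
    assert (Hr : (eps + P * delta) / (e + P * delta - 1) <= 1) by (apply div_le1; lra).
    assert (Hr0 : 0 <= (eps + P * delta) / (e + P * delta - 1)) by (apply div_nonneg; nra).
    assert (0 <= P + C * (e - 1)) by nra.
    assert (P + C * (e - 1) <= 3 * P) by nra.
    nra. }
  pose proof (md_bound d Hd).
  assert (0 <= B_ed d eps delta * (eps + 2 ^ d * delta)).
  { apply Rmult_le_pos. left; apply B_pos; auto. nra. }
  set (X := B_ed d eps delta * (eps + 2 ^ d * delta)) in *.
  assert (Hsq : (X * md d) ^ 2 <= 9 * (2 ^ d) ^ 2) by (assert (0 <= X * md d) by nra; nra).
  assert (X ^ 2 * md d ^ 2 <= 72 * INR d * md d ^ 2) by nra.
  assert (0 < md d ^ 2) by nra. nra. Qed.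

Theorem theorem1 :
  exists K : R,
  forall (d N : nat) (eps delta beta : R) (x : nat -> nat -> R),
    (1 <= d)%nat -> (1 <= N)%nat ->
    0 < eps <= 1 -> 0 <= delta -> Cd d * delta < 1 ->
    0 < beta <= / 2 -> ln (2 * INR d / beta) <= INR N ->
    (forall i j, (i < N)%nat -> (j < d)%nat -> -1 <= x i j <= 1) ->
    prob_mech1 d N eps delta x
      (fun ys => maxdev d N eps delta x ys <=
         K * sqrt (INR d * ln (INR d / beta)) / ((eps + 2 ^ d * delta) * sqrt (INR N)))
    >= 1 - beta.
Proof.
  exists 100. intros d N eps delta beta x Hd HN Heps Hdel HCd Hbeta HL Hx.
  set (T := 100 * sqrt (INR d * ln (INR d / beta)) / ((eps + 2 ^ d * delta) * sqrt (INR N))).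
  set (B := B_ed d eps delta).
  set (c := B + 1).
  set (E := eps + 2 ^ d * delta).
  set (L := ln (2 * INR d / beta)). assert (HLN : L <= INR N) by exact HL.
  assert (HB1 : 1 <= B) by (apply B_ge1; auto; lra).
  assert (Hdr : 1 <= INR d) by (replace 1 with (INR 1) by reflexivity; apply le_INR; auto).
  assert (HNr : 1 <= INR N) by (replace 1 with (INR 1) by reflexivity; apply le_INR; auto).
  assert (HP : 0 < 2 ^ d) by (apply pow_lt; lra).
  assert (HE : 0 < E) by (unfold E; nra).
  assert (Hdb : 2 <= INR d / beta).
  { apply (Rmult_le_reg_r beta); [lra|]. unfold Rdiv. rewrite Rmult_assoc, Rinv_l, Rmult_1_r by lra. nra. }
  assert (Hln2 : 0 < ln 2) by (rewrite <- ln_1; apply ln_increasing; lra).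
  assert (Hlnd : ln 2 <= ln (INR d / beta)).
  { destruct Hdb as [H|H]; [left; apply ln_increasing; lra| rewrite H; lra]. }
  assert (HLeq : L = ln 2 + ln (INR d / beta)).
  { unfold L. rewrite <- ln_mult by lra. f_equal. field. lra. }
  assert (HLpos : 0 < L) by lra.
  assert (HL2 : L <= 2 * ln (INR d / beta)) by lra.
  set (s := sqrt (L / INR N)).
  assert (Hs2 : s * s = L / INR N) by (apply sqrt_sqrt; apply div_nonneg; lra).
  assert (Hspos : 0 < s) by (apply sqrt_lt_R0; apply Rdiv_lt_0_compat; lra).
  assert (Hs1 : s <= 1).
  { rewrite <- sqrt_1. apply sqrt_le_1_alt. apply div_le1; lra. }
  set (lam := s / (2 * c)).
  assert (Hc : 2 <= c) by (unfold c; lra).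
  assert (Hlam : 0 < lam) by (apply Rdiv_lt_0_compat; lra).
  assert (Hlc : lam * c <= 1) by (unfold lam; replace (s / (2 * c) * c) with (s / 2) by (field; lra); lra).
  assert (HcE : (c * E) ^ 2 <= 288 * INR d).
  { assert (H : (B * E) ^ 2 <= 72 * INR d) by (apply BE_bound; auto).
    assert (0 <= B * E) by nra. unfold c.
    assert (H1 : (B + 1) * E <= 2 * (B * E)) by nra. assert (H2 : 0 <= (B + 1) * E) by nra.
    assert (H3 : ((B + 1) * E) ^ 2 <= (2 * (B * E)) ^ 2) by (apply pow_incr; auto). nra. }
  assert (HT3 : 3 * c * s <= T).
  { unfold T, s. rewrite sqrt_div_alt by lra. fold E.
    assert (HsN : 0 < sqrt (INR N)) by (apply sqrt_lt_R0; lra).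
    assert (Hlg : 0 <= INR d * ln (INR d / beta)) by nra.
    assert (HsL : sqrt L * sqrt L = L) by (apply sqrt_sqrt; lra).
    assert (Hsd : sqrt (INR d * ln (INR d / beta)) * sqrt (INR d * ln (INR d / beta)) = INR d * ln (INR d / beta)) by (apply sqrt_sqrt; lra).
    assert (0 <= sqrt L) by apply sqrt_pos. assert (0 <= sqrt (INR d * ln (INR d / beta))) by apply sqrt_pos.
    assert (Hkey : 3 * c * E * sqrt L <= 100 * sqrt (INR d * ln (INR d / beta))).
    { assert (Hsq : (3 * c * E * sqrt L) ^ 2 <= (100 * sqrt (INR d * ln (INR d / beta))) ^ 2).
      { replace ((3 * c * E * sqrt L) ^ 2) with (9 * (c * E) ^ 2 * (sqrt L * sqrt L)) by ring.
        replace ((100 * sqrt (INR d * ln (INR d / beta))) ^ 2) with (10000 * (sqrt (INR d * ln (INR d / beta)) * sqrt (INR d * ln (INR d / beta)))) by ring.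
        rewrite HsL, Hsd. assert (0 <= ln (INR d / beta)) by lra. nra. }
      assert (Ha0 : 0 <= 3 * c * E * sqrt L) by (repeat apply Rmult_le_pos; lra).
      destruct (Rle_or_lt (3 * c * E * sqrt L) (100 * sqrt (INR d * ln (INR d / beta)))) as [|Hlt]; auto.
      assert (Hb0 : 0 <= 100 * sqrt (INR d * ln (INR d / beta))) by lra.
      pose proof (Rmult_le_0_lt_compat _ _ _ _ Hb0 Hb0 Hlt Hlt) as Hc2.
      simpl in Hsq. lra. }
    replace (3 * c * (sqrt L / sqrt (INR N))) with ((3 * c * E * sqrt L) / (E * sqrt (INR N))) by (field; lra).
    unfold Rdiv. apply Rmult_le_compat_r; [left; apply Rinv_0_lt_compat; nra| auto]. }
  assert (HT0 : 0 <= T) by nra.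
  pose proof (tail_bound d N eps delta x Hd (proj1 Heps) Hdel HCd Hx T lam HT0 Hlam ltac:(fold B c; lra) HN) as Htb.
  fold B c in Htb. unfold prob_mech1. fold T.
  assert (Hexp : - lam * INR N * T + INR N * (2 * lam ^ 2 * c ^ 2) <= - L).
  { assert (Hlt : lam * INR N * (3 * c * s) <= lam * INR N * T) by (apply Rmult_le_compat_l; nra).
    replace (lam * INR N * (3 * c * s)) with (3 / 2 * (INR N * (s * s))) in Hlt by (unfold lam; field; lra).
    replace (INR N * (2 * lam ^ 2 * c ^ 2)) with (1 / 2 * (INR N * (s * s))) by (unfold lam; field; lra).
    rewrite Hs2 in *. replace (INR N * (L / INR N)) with L in * by (field; lra). lra. }
  assert (HeL : exp (- L) = beta / (2 * INR d)).
  { rewrite exp_Ropp. unfold L. rewrite exp_ln by (apply Rdiv_lt_0_compat; lra). field. lra. }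
  pose proof (exp_le_mono _ _ Hexp). rewrite HeL in H.
  assert (2 * INR d * exp (- lam * INR N * T + INR N * (2 * lam ^ 2 * c ^ 2)) <= beta).
  { apply Rle_trans with (2 * INR d * (beta / (2 * INR d))). apply Rmult_le_compat_l; lra. right; field; lra. }
  fold B. lra.
Qed.
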